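(* Consider a single-core non-preemptive server of capacity $f>0$ and tasks $1,\dots,N$, all available at time $0$, task $a$ requiring $\alpha_a$ CPU cycles with deadline $\beta_a$. Let $\mathbf{s}$ be an optimal ordered set without any outages, of size $M$, and let $\mathbf{s}'$ be the ordered set, of size $P$, produced by the Optimal Job Scheduling algorithm; $\mathbf{s}'$ has no outages. Then $\mathbf{s}'$ is an optimal ordered set and $P=M$.
   Context: An ordered set is a sequence of distinct tasks executed back-to-back from time $0$; the task in position $l$ completes at $\frac1f\sum_{k=1}^{l}\alpha_{s(k)}$ and is in outage if this exceeds its deadline. An optimal ordered set is an ordered set with no outage of maximum cardinality. Optimal Job Scheduling algorithm: let $\mathbf{c}=[c(1),\dots,c(N)]$ be the ordering of $[1:N]$ by nondecreasing $\alpha$ (ties broken by nonincreasing $\beta$) and $\mathbf{b}=[b(1),\dots,b(N)]$ the ordering of $[1:N]$ by nondecreasing $\beta$ (ties broken by nondecreasing $\alpha$). Initialize $\mathbf{q}=[q(1),\dots,q(N)]=\mathbf 0$ (entry $0$ denotes an empty slot, with $\alpha_0=0$). For $i=1,\dots,N$: find $i^*$ with $b(i^* )=c(i)$ and set $q(i^* )\gets b(i^* )$; if for some $j\in[i^*:N]$ with $q(j)\neq0$ we have $\sum_{k=1}^{j}\alpha_{q(k)}/f>\beta_{q(j)}$, reset $q(i^* )\gets0$. The output $\mathbf{s}'$ is the sequence of nonzero entries of $\mathbf{q}$ in order, of length $P$. *)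

(* Defs.v *)
From mathcomp Require Import all_boot all_order all_algebra.
Set Implicit Arguments. Unset Strict Implicit. Unset Printing Implicit Defensive.
Import Order.TTheory GRing.Theory Num.Theory.
Local Open Scope ring_scope.

(* Tasks are the natural numbers 1..N; 0 denotes an empty slot. *)

Section Sched.
Variable R : realFieldType.
Variables (N : nat) (f : R) (alpha beta : nat -> R).

Definition is_ordered_set (s : seq nat) : bool :=
  uniq s && all (fun a => (0 < a <= N)%N) s.

(* Completion time of the task in (0-based) position l of s. *)
Definition completion (s : seq nat) (l : nat) : R :=
  (\sum_(k < l.+1) alpha (nth 0%N s k)) / f.

Definition no_outage (s : seq nat) : Prop :=
  forall l, (l < size s)%N -> completion s l <= beta (nth 0%N s l).

Definition optimal_ordered_set (s : seq nat) : Prop :=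
  [/\ is_ordered_set s, no_outage s &
      forall t, is_ordered_set t -> no_outage t -> (size t <= size s)%N].

(* alpha extended with alpha_0 = 0 for empty slots. *)
Definition alphaz (k : nat) : R := if k == 0%N then 0 else alpha k.

(* One iteration of the Optimal Job Scheduling algorithm, inserting task x
   (= c(i)) at the position i* of x in b (0-based here). *)
Definition ojs_step (b : seq nat) (q : seq nat) (x : nat) : seq nat :=
  let istar := index x b in
  let q' := set_nth 0%N q istar x in
  if [exists j : 'I_N, [&& (istar <= j)%N, nth 0%N q' j != 0%N &
        beta (nth 0%N q' j) < (\sum_(k < j.+1) alphaz (nth 0%N q' k)) / f]]
  then q else q'.

Definition ojs (c b : seq nat) : seq nat :=
  [seq k <- foldl (ojs_step b) (nseq N 0%N) c | k != 0%N].

Definition c_order (x y : nat) : bool :=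
  (alpha x < alpha y) || ((alpha x == alpha y) && (beta y <= beta x)).

Definition b_order (x y : nat) : bool :=
  (beta x < beta y) || ((beta x == beta y) && (alpha x <= alpha y)).

End Sched.

(* Main.v *)
Require Import Defs.
From mathcomp Require Import all_boot all_order all_algebra.
From mathcomp Require Import zify ring lra.
Set Implicit Arguments. Unset Strict Implicit. Unset Printing Implicit Defensive.
Import Order.TTheory GRing.Theory Num.Theory.
Local Open Scope ring_scope.

Section Pf.
Variable R : realFieldType.
Variables (N : nat) (f : R) (alpha beta : nat -> R) (c b : seq nat).
Hypothesis fpos : 0 < f.
Hypothesis apos : forall a, (0 < a <= N)%N -> 0 < alpha a.
Hypothesis Hc : perm_eq c (iota 1 N).
Hypothesis Hcs : sorted (c_order alpha beta) c.
Hypothesis Hb : perm_eq b (iota 1 N).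
Hypothesis Hbs : sorted (b_order alpha beta) b.
Implicit Types P Q : pred nat.

Definition w (P : pred nat) k := if P (nth 0%N b k) then alpha (nth 0%N b k) else 0.
Definition load P p := \sum_(k < p.+1) w P k.
Definition feasb (P : pred nat) :=
  [forall p : 'I_N, P (nth 0%N b p) ==> (load P p / f <= beta (nth 0%N b p))].
Definition addp (P : pred nat) y : pred nat := fun z => (z == y) || P z.
Definition delp (P : pred nat) y : pred nat := fun z => (z != y) && P z.
Definition qof (P : pred nat) := [seq (if P y then y else 0%N) | y <- b].
Fixpoint gr k := if k is k'.+1 then
   (let x := nth 0%N c k' in
    if feasb (addp (fun z => z \in gr k') x) then x :: gr k' else gr k')
  else [::].

Lemma sizeb : size b = N.
Proof. by rewrite (perm_size Hb) size_iota. Qed.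
Lemma sizec : size c = N.
Proof. by rewrite (perm_size Hc) size_iota. Qed.
Lemma uniqb : uniq b.
Proof. by rewrite (perm_uniq Hb) iota_uniq. Qed.
Lemma uniqc : uniq c.
Proof. by rewrite (perm_uniq Hc) iota_uniq. Qed.
Lemma memb y : (y \in b) = (0 < y <= N)%N.
Proof. by rewrite (perm_mem Hb) mem_iota; lia. Qed.
Lemma memc y : (y \in c) = (0 < y <= N)%N.
Proof. by rewrite (perm_mem Hc) mem_iota; lia. Qed.
Lemma nthb_in k : (k < N)%N -> nth 0%N b k \in b.
Proof. by move=> h; rewrite mem_nth // sizeb. Qed.
Lemma nthc_in k : (k < N)%N -> nth 0%N c k \in c.
Proof. by move=> h; rewrite mem_nth // sizec. Qed.
Lemma index_nthb k : (k < N)%N -> index (nth 0%N b k) b = k.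
Proof. by move=> h; rewrite index_uniq // ?sizeb // uniqb. Qed.
Lemma index_nthc k : (k < N)%N -> index (nth 0%N c k) c = k.
Proof. by move=> h; rewrite index_uniq // ?sizec // uniqc. Qed.

Lemma b_trans : transitive (b_order alpha beta).
Proof.
move=> y x z; rewrite /b_order => /orP[h1|/andP[/eqP h1 h2]] /orP[h3|/andP[/eqP h3 h4]].
- by rewrite (lt_trans h1 h3).
- by rewrite -h3 h1.
- by rewrite h1 h3.
- by rewrite h1 h3 eqxx (le_trans h2 h4) orbT.
Qed.

Lemma c_trans : transitive (c_order alpha beta).
Proof.
move=> y x z; rewrite /c_order => /orP[h1|/andP[/eqP h1 h2]] /orP[h3|/andP[/eqP h3 h4]].
- by rewrite (lt_trans h1 h3).
- by rewrite -h3 h1.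
- by rewrite h1 h3.
- by rewrite h1 h3 eqxx (le_trans h4 h2) orbT.
Qed.

Lemma beta_mono i j : (i <= j)%N -> (j < N)%N ->
  beta (nth 0%N b i) <= beta (nth 0%N b j).
Proof.
rewrite leq_eqVlt => /orP[/eqP->|hij hj] //.
have := sorted_ltn_nth b_trans 0%N Hbs; rewrite sizeb => H.
have /orP[h|/andP[/eqP h _]] := H i j ltac:(rewrite inE; lia) ltac:(by rewrite inE) hij.
  exact: ltW.
by rewrite h.
Qed.

Lemma alpha_mono i j : (i < j)%N -> (j < N)%N ->
  alpha (nth 0%N c i) <= alpha (nth 0%N c j).
Proof.
move=> hij hj.
have := sorted_ltn_nth c_trans 0%N Hcs; rewrite sizec => H.
have /orP[h|/andP[/eqP h _]] := H i j ltac:(rewrite inE; lia) ltac:(by rewrite inE) hij.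
  exact: ltW.
by rewrite h.
Qed.

Lemma feasP P : reflect (forall p, (p < N)%N -> P (nth 0%N b p) ->
   load P p / f <= beta (nth 0%N b p)) (feasb P).
Proof.
apply: (iffP forallP) => [H p hp Pp|H p].
  by have /implyP := H (Ordinal hp); apply.
by apply/implyP; apply: H.
Qed.

Lemma w_ge0 P k : (k < N)%N -> 0 <= w P k.
Proof.
move=> hk; rewrite /w; case: ifP => // _; apply: ltW; apply: apos.
by rewrite -memb nthb_in.
Qed.

Lemma load_le P Q p : (p < N)%N ->
  (forall k, (k <= p)%N -> P (nth 0%N b k) -> Q (nth 0%N b k)) -> load P p <= load Q p.
Proof.
move=> hp H; apply: ler_sum => k _; rewrite /w.
have hk : (k <= p)%N by rewrite -ltnS.
case: ifP => Pk; first by rewrite (H k hk Pk).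
by case: ifP => // _; apply: ltW; apply: apos; rewrite -memb nthb_in //; lia.
Qed.

Lemma load_eq P Q p :
  (forall k, (k <= p)%N -> P (nth 0%N b k) = Q (nth 0%N b k)) -> load P p = load Q p.
Proof.
move=> H; apply: eq_bigr => k _; rewrite /w H //; by rewrite -ltnS.
Qed.

Lemma load_div_le x y : x <= y -> x / f <= y / f.
Proof. by move=> h; rewrite ler_pM2r // invr_gt0. Qed.

Lemma load_add P y p : (p < N)%N -> y \in b -> ~~ P y -> (index y b <= p)%N ->
  load (addp P y) p = load P p + alpha y.
Proof.
move=> hp yb Py hyp; rewrite /load.
have hi : (index y b < p.+1)%N by [].
rewrite [in RHS](bigD1 (Ordinal hi)) //= [in LHS](bigD1 (Ordinal hi)) //=.
have e1 : w (addp P y) (index y b) = alpha y by rewrite /w /addp nth_index // eqxx.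
have e2 : w P (index y b) = 0 by rewrite /w nth_index // (negbTE Py).
rewrite e1 e2 add0r addrC; congr (_ + _).
apply: eq_bigr => k hk; rewrite /w /addp.
have -> : (nth 0%N b k == y) = false => //.
apply/negbTE; apply: contra hk => /eqP hy.
apply/eqP; apply: val_inj => /=; rewrite -hy index_nthb //.
have := ltn_ord k; lia.
Qed.

Lemma feas_sub P Q : feasb Q ->
  (forall k, (k < N)%N -> P (nth 0%N b k) -> Q (nth 0%N b k)) -> feasb P.
Proof.
move=> /feasP HQ H; apply/feasP => p hp Pp.
apply: le_trans (HQ p hp (H p hp Pp)); apply: load_div_le; apply: load_le => // k hk.
apply: H; lia.
Qed.

Lemma loadL P p k : feasb P -> (p < N)%N -> (k <= p)%N -> P (nth 0%N b k) ->
  load P p / f <= beta (nth 0%N b p).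
Proof.
move=> /feasP HP; elim: p => [|p IH] hp hk Pk.
  by move: hk; rewrite leqn0 => /eqP h; subst k; apply: HP.
case Pp: (P (nth 0%N b p.+1)); first exact: HP.
move: hk; rewrite leq_eqVlt => /orP[/eqP h|hk]; first by subst k; rewrite Pk in Pp.
rewrite /load big_ord_recr /= {2}/w Pp addr0.
apply: le_trans (IH (ltnW hp) hk Pk) _; apply: beta_mono; lia.
Qed.


Lemma nthb_neq0 k : (k < N)%N -> nth 0%N b k != 0%N.
Proof. by move=> h; have := nthb_in h; rewrite memb; case: (nth 0%N b k). Qed.

Lemma size_qof P : size (qof P) = N.
Proof. by rewrite size_map sizeb. Qed.

Lemma qof_nth P k : (k < N)%N ->
  nth 0%N (qof P) k = if P (nth 0%N b k) then nth 0%N b k else 0%N.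
Proof. by move=> h; rewrite (nth_map 0%N) // sizeb. Qed.

Lemma qof_ext P Q : P =1 Q -> qof P = qof Q.
Proof. by move=> H; apply: eq_map => y; rewrite H. Qed.

Lemma feasb_ext P Q : P =1 Q -> feasb P = feasb Q.
Proof.
move=> H; apply: eq_forallb => p; rewrite H (@load_eq P Q) // => k _; exact: H.
Qed.

Lemma nseq_qof : nseq N 0%N = qof pred0.
Proof.
apply: (@eq_from_nth _ 0%N); first by rewrite size_nseq size_qof.
by move=> i; rewrite size_nseq => hi; rewrite nth_nseq hi qof_nth.
Qed.

Lemma set_qof P x : x \in b -> set_nth 0%N (qof P) (index x b) x = qof (addp P x).
Proof.
move=> xb; have hx : (index x b < N)%N by rewrite -sizeb index_mem.
apply: (@eq_from_nth _ 0%N).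
  by rewrite size_set_nth !size_qof; apply/maxn_idPr.
move=> i; rewrite size_set_nth size_qof (maxn_idPr hx) => hi.
rewrite nth_set_nth /= !qof_nth // /addp.
case: eqP => [->|hne]; first by rewrite nth_index // eqxx.
have -> : (nth 0%N b i == x) = false => //.
apply/negbTE/eqP => hb; apply: hne; by rewrite -hb index_nthb.
Qed.

Lemma sum_qof P j : (j < N)%N ->
  \sum_(k < j.+1) alphaz alpha (nth 0%N (qof P) k) = load P j.
Proof.
move=> hj; apply: eq_bigr => k _.
have hk : (k < N)%N by have := ltn_ord k; lia.
rewrite qof_nth // /w /alphaz; case: (P (nth 0%N b k)) => //=.
have := nthb_neq0 hk; by case: eqP.
Qed.

Lemma step P x : feasb P -> x \in b ->
  ojs_step N f alpha beta b (qof P) x =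
  if feasb (addp P x) then qof (addp P x) else qof P.
Proof.
move=> fP xb; rewrite /ojs_step set_qof //.
set P' := addp P x.
have hx : (index x b < N)%N by rewrite -sizeb index_mem.
set E := [exists j : 'I_N, _].
have -> : E = ~~ feasb P'.
  apply/idP/idP.
    case/existsP => j /and3P[hj nz hlt]; apply/negP => /feasP H.
    rewrite qof_nth // in nz hlt; rewrite sum_qof // in hlt.
    move: nz hlt; case: ifP => // Pj _ hlt.
    by have := H j (ltn_ord j) Pj; rewrite leNgt hlt.
  rewrite negb_forall => /existsP[p]; rewrite negb_imply -ltNge => /andP[Pp hlt].
  apply/existsP; exists p; rewrite qof_nth // sum_qof // Pp nthb_neq0 //= hlt andbT.
  rewrite leqNgt; apply/negP => hp.
  have hbx : nth 0%N b p != x.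
    by apply/eqP => hb; move: hp; rewrite -hb index_nthb // ltnn.
  have Pp0 : P (nth 0%N b p) by move: Pp; rewrite /P' /addp (negbTE hbx).
  have := (feasP _ fP) p (ltn_ord p) Pp0.
  rewrite (@load_eq P P' p) ?leNgt ?hlt // => k hk.
  rewrite /P' /addp; have -> : (nth 0%N b k == x) = false => //.
  apply/negbTE/eqP => hb.
  have hkN : (k < N)%N := leq_ltn_trans hk (ltn_ord p).
  move: hp; rewrite -hb index_nthb // => hp.
  by rewrite ltnNge hk in hp.
by case: (feasb P').
Qed.

Lemma gr_feas k : feasb (fun z => z \in gr k).
Proof.
elim: k => [|k IH] /=.
  by apply/feasP => p _; rewrite in_nil.
case: ifP => // H; rewrite (feasb_ext (Q := addp (fun z => z \in gr k) (nth 0%N c k))) // => z; by rewrite in_cons.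
Qed.

Lemma fold_gr k : (k <= N)%N ->
  foldl (ojs_step N f alpha beta b) (nseq N 0%N) (take k c) = qof (fun z => z \in gr k).
Proof.
elim: k => [|k IH] hk.
  by rewrite take0 /= nseq_qof; apply: qof_ext => z; rewrite in_nil.
rewrite (take_nth 0%N) ?sizec // foldl_rcons IH; last by lia.
rewrite step ?gr_feas //; last by rewrite memb -memc nthc_in.
rewrite /=; case: ifP => // _; apply: qof_ext => z; by rewrite in_cons.
Qed.

Lemma gr_index k y : (k <= N)%N -> y \in gr k -> (index y c < k)%N.
Proof.
elim: k => [|k IH] hk //=.
case: ifP => _; last by move=> /IH h; have := h ltac:(lia); lia.
rewrite in_cons => /orP[/eqP->|/IH h]; last by have := h ltac:(lia); lia.
rewrite index_nthc //.
Qed.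

Lemma gr_char m k y : (m <= N)%N -> (k <= m)%N ->
  (y \in gr k) = (y \in gr m) && (index y c < k)%N.
Proof.
elim: m k => [|m IH] k hm hkm.
  by move: hkm; rewrite leqn0 => /eqP->.
move: hkm; rewrite leq_eqVlt => /orP[/eqP->|hkm].
  case h: (y \in gr m.+1) => //=; by rewrite (gr_index hm h).
rewrite (IH k) //=; try lia.
case: ifP => _ //; rewrite in_cons.
case: eqP => [->|] //=.
have hm' : (m < N)%N by lia.
rewrite index_nthc //.
have -> : (m < k)%N = false by apply/negbTE; rewrite -leqNgt; lia.
by rewrite !andbF.
Qed.


Ltac clean := repeat match goal with H : _ |- _ => clear H end.

Definition G : pred nat := fun z => z \in gr N.

Lemma count_add P y : y \in b -> ~~ P y -> count (addp P y) b = (count P b).+1.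
Proof.
move=> yb Py.
have := count_predUI (pred1 y) P b.
rewrite (@eq_count _ (predI (pred1 y) P) pred0); last first.
  by move=> z /=; case: eqP => [->|]; rewrite ?(negbTE Py).
rewrite count_pred0 addn0 count_uniq_mem ?uniqb // yb add1n => <-.
by apply: eq_count => z.
Qed.

Lemma nth_index_c y : y \in b -> nth 0%N c (index y c) = y /\ (index y c < N)%N.
Proof.
move=> yb; have yc : y \in c by rewrite memc -memb.
by rewrite nth_index // -sizec index_mem.
Qed.

Lemma full_agree T : (forall i, (i < N)%N -> T (nth 0%N c i) = G (nth 0%N c i)) ->
  count T b = count G b.
Proof.
move=> H; apply: eq_in_count => y yb.
have [e hi] := nth_index_c yb; by rewrite -e H.
Qed.

Lemma main d : forall T, feasb T ->
  (forall i, (i < N - d)%N -> T (nth 0%N c i) = G (nth 0%N c i)) ->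
  (count T b <= count G b)%N.
Proof.
elim: d => [|d IH] T fT agr.
  by rewrite (full_agree (T := T)) // => i hi; apply: agr; rewrite subn0.
case: (leqP N d) => hdN.
  apply: IH => // i hi; apply: agr; move: hi hdN; clean; lia.
set i := (N - d.+1)%N.
have hiN : (i < N)%N by rewrite /i; move: hdN; clean; lia.
have hi1 : (N - d = i.+1)%N by rewrite /i; move: hdN; clean; lia.
set s := nth 0%N c i.
have sb : s \in b by rewrite memb -memc nthc_in.
have neq_s j : (j < i)%N -> (nth 0%N c j == s) = false.
  move=> hj; apply/negbTE/eqP => e.
  have hjN : (j < N)%N by move: hj hiN; clean; lia.
  have := @index_nthc j hjN; rewrite e /s index_nthc // => hh; move: hh hj; clean; lia.
have Gs_char : (s \in gr i.+1) = G s.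
  by rewrite (gr_char (m := N)) // /s index_nthc // ltnSn andbT.
case hT: (T s); case hG: (G s).
- apply: IH => // j; rewrite hi1 ltnS leq_eqVlt => /orP[/eqP->|hj].
    by rewrite -/s hT hG.
  by apply: agr; move: hj hi1; clean; lia.
-
  exfalso.
  have Hrej : feasb (addp (fun z => z \in gr i) s) = false.
    apply/negbTE/negP => hf; move: Gs_char; rewrite /= -/s hf in_cons eqxx /= hG.
    by [].
  move: Hrej; rewrite (@feas_sub _ T) // => k hk; rewrite /addp.
  case: eqP => [->|_] //= hk'.
  have kb : nth 0%N b k \in b by apply: nthb_in.
  have [e hix] := nth_index_c kb.
  have hiN' : (i <= N)%N by move: hiN; clean; lia.
  move: hk'; rewrite (gr_char (m := N)) // => /andP[Gk hidx].
  rewrite -e agr ?e //; move: hidx hi1; clean; lia.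
-
  have Ts_agr (T' : pred nat) : T' s -> (forall j, (j < i)%N -> T' (nth 0%N c j) = T (nth 0%N c j)) ->
      forall j, (j < N - d)%N -> T' (nth 0%N c j) = G (nth 0%N c j).
    move=> hs hj j; rewrite hi1 ltnS leq_eqVlt => /orP[/eqP->|hj'].
      by rewrite -/s hs hG.
    by rewrite hj // agr //; move: hj' hi1; clean; lia.
  have cntTs : count (addp T s) b = (count T b).+1 by rewrite count_add // hT.
  case fTs: (feasb (addp T s)).
    have hs1 : addp T s s by rewrite /addp eqxx.
    have agr' : forall j, (j < i)%N -> addp T s (nth 0%N c j) = T (nth 0%N c j).
      by move=> j hj; rewrite /addp neq_s.
    have := IH _ fTs (Ts_agr _ hs1 agr').
    rewrite cntTs => h; exact: ltnW h.
  set Ts := addp T s.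
  pose V p := [&& (p < N)%N, Ts (nth 0%N b p) & beta (nth 0%N b p) < load Ts p / f].
  have exV : exists p, V p.
    move: fTs; move/negbT; rewrite negb_forall => /existsP[p].
    rewrite negb_imply -ltNge => /andP[Pp hlt]; exists p; by apply/and3P; split.
  case: (ex_minnP exV) => ps /and3P[hps Tps hvs] pmin.
  have fG : feasb G by rewrite /G; exact: (gr_feas N).
  case E: [exists k : 'I_N, [&& (k <= ps)%N, T (nth 0%N b k) & ~~ (index (nth 0%N b k) c < i)%N]].
  + case/existsP: E => ku /and3P[hku Tu hui].
    set u := nth 0%N b ku in Tu hui *.
    have ub : u \in b by apply: nthb_in.
    have [eu huN] := nth_index_c ub.
    have hus : u != s by apply/eqP => e; rewrite e hT in Tu.
    have hui' : (i < index u c)%N.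
      rewrite ltn_neqAle leqNgt hui andbT; apply/eqP => e.
      by move: hus; rewrite /s e eu eqxx.
    have hasu : alpha s <= alpha u by have := alpha_mono hui' huN; rewrite eu.
    set T' : pred nat := addp (delp T u) s.
    have Tdu : ~~ delp T u s by rewrite /delp hT andbF.
    have cntT : count T b = count T' b.
      rewrite count_add //; rewrite -(@count_add (delp T u) u) //; last by rewrite /delp eqxx.
      by apply: eq_count => z; rewrite /addp /delp; case: eqP => [->|].
    have fT' : feasb T'.
      apply/feasP => p hp T'p.
      have hsN : (index s b < N)%N by rewrite -sizeb index_mem.
      case: (ltnP p (index s b)) => hps1.
      * have HT : forall k, (k <= p)%N -> T' (nth 0%N b k) -> T (nth 0%N b k).
          move=> k hk; rewrite /T' /addp /delp.
          have -> : (nth 0%N b k == s) = false.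
            apply/negbTE/eqP => e; have hkN : (k < N)%N by move: hk hp; clean; lia.
            move: hps1; rewrite -e index_nthb // => hh; move: hh hk; clean; lia.
          by case/andP.
        apply: le_trans (load_div_le (load_le hp HT)) _.
        by apply: (feasP _ fT) => //; apply: HT.
      * case: (ltnP p ku) => hpu.
        - have HT : forall k, (k <= p)%N -> T' (nth 0%N b k) -> Ts (nth 0%N b k).
            move=> k hk; rewrite /T' /Ts /addp /delp.
            by case: (_ == s) => //= /andP[].
          apply: le_trans (load_div_le (load_le hp HT)) _.
          rewrite leNgt; apply/negP => hv.
          have := pmin p ltac:(by apply/and3P; split => //; apply: HT).
          have := leq_trans hpu hku; clean; lia.
        - have e1 : load T' p = load (delp T u) p + alpha s.
            by rewrite /T' load_add // index_mem.
          have e2 : load T p = load (delp T u) p + alpha u.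
            rewrite -load_add //; first by apply: load_eq => k _; rewrite /addp /delp; case: eqP => [->|].
            + by rewrite /delp eqxx.
            + by rewrite /u index_nthb.
          apply: le_trans (loadL fT hp hpu Tu).
          apply: load_div_le; rewrite e1 e2; by rewrite lerD2l.
    rewrite cntT; apply: IH => //; apply: Ts_agr; first by rewrite /T' /addp eqxx.
    move=> j hj; rewrite /T' /addp /delp neq_s //=.
    have -> : (nth 0%N c j != u) = true => //.
    apply/negP => /eqP e; have hjN : (j < N)%N by move: hj hiN; clean; lia.
    move: hui'; rewrite -e index_nthc // => hh; move: hh hj; clean; lia.
  + exfalso.
    pose A : pred nat := fun z => (z == s) || (T z && (index z c < i)%N).
    have fA : feasb A.
      apply: (feas_sub fG) => k hk; rewrite /A; case: eqP => [->|_] //= /andP[Tk hk'].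
      have kb : nth 0%N b k \in b by apply: nthb_in.
      have [e hix] := nth_index_c kb.
      by rewrite -e -agr ?e //; move: hk' hi1; clean; lia.
    have eqA : forall k, (k <= ps)%N -> Ts (nth 0%N b k) = A (nth 0%N b k).
      move=> k hk; rewrite /Ts /A /addp; case: (_ == s) => //=.
      case Tk: (T _) => //=; apply/esym/negbNE/negP => hn.
      move/negbT: E; rewrite negb_exists => /forallP /(_ (Ordinal (leq_ltn_trans hk hps))) /=.
      by rewrite hk Tk hn.
    have := (feasP _ fA) ps hps ltac:(by rewrite -eqA).
    by rewrite -(load_eq eqA) leNgt hvs.
- apply: IH => // j; rewrite hi1 ltnS leq_eqVlt => /orP[/eqP->|hj].
    by rewrite -/s hT hG.
  by apply: agr; move: hj hi1; clean; lia.
Qed.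

Lemma opt_G T : feasb T -> (count T b <= count G b)%N.
Proof. move=> fT; apply: (@main N T fT) => i; by rewrite subnn. Qed.



Lemma ojs_eq : ojs N f alpha beta c b = [seq y <- b | G y].
Proof.
rewrite /ojs.
have -> : foldl (ojs_step N f alpha beta b) (nseq N 0%N) c = qof G.
  by rewrite -[in LHS](@take_oversize _ N c) ?sizec // fold_gr.
rewrite filter_map.
rewrite (@eq_in_filter _ _ G); last first.
  move=> y yb /=; rewrite /G; case: (y \in gr N) => //=.
  by move: yb; rewrite memb; case: y.
rewrite -[RHS]map_id; apply/eq_in_map => y; rewrite mem_filter => /andP[Gy _].
by rewrite Gy.
Qed.

Lemma G_ordered : is_ordered_set N [seq y <- b | G y].
Proof.
rewrite /is_ordered_set filter_uniq ?uniqb //=.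
by apply/allP => y; rewrite mem_filter -memb => /andP[].
Qed.

Lemma pref (v : seq nat) (P : pred nat) l : (l < size (filter P v))%N ->
  exists p, [/\ (p < size v)%N, nth 0%N v p = nth 0%N (filter P v) l &
    \sum_(k < l.+1) alpha (nth 0%N (filter P v) k) =
    \sum_(k < p.+1) (if P (nth 0%N v k) then alpha (nth 0%N v k) else 0)].
Proof.
elim: v l => [|y v IH] l //=.
case Py: (P y) => /= hl.
  case: l hl => [|l] hl.
    exists 0%N; split => //; by rewrite !big_ord_recl !big_ord0 /= Py.
  have [p [hp e1 e2]] := IH l hl.
  exists p.+1; split => //.
  rewrite big_ord_recl [in RHS]big_ord_recl /= Py; congr (_ + _).
  by rewrite e2.
have [p [hp e1 e2]] := IH l hl.
exists p.+1; split => //.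
by rewrite [in RHS]big_ord_recl /= Py add0r e2.
Qed.

Lemma G_noout : no_outage f alpha beta [seq y <- b | G y].
Proof.
move=> l hl; rewrite /completion.
have [p [hp e1 e2]] := pref hl.
rewrite e2 -e1.
have Gp : G (nth 0%N b p).
  by rewrite e1; have := mem_nth 0%N hl; rewrite mem_filter => /andP[].
rewrite sizeb in hp.
exact: (feasP _ (gr_feas N)) p hp Gp.
Qed.

Lemma sum_sub (u v : seq nat) (F : nat -> R) : uniq u -> uniq v -> {subset u <= v} ->
  (forall y, y \in v -> 0 <= F y) -> \sum_(y <- u) F y <= \sum_(y <- v) F y.
Proof.
move=> uu uv suv F0.
rewrite -[in X in _ <= X](perm_big _ (permEl (perm_filterC (fun y => y \in u) v))) big_cat /=.
have pu : perm_eq [seq y <- v | y \in u] u.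
  apply: uniq_perm; first exact: filter_uniq.
    by [].
  by move=> y; rewrite mem_filter; case yu: (y \in u) => //=; apply: suv.
rewrite (perm_big _ pu) lerDl big_seq; apply: sumr_ge0 => y.
by rewrite mem_filter => /andP[_ yv]; apply: F0.
Qed.


Lemma conv1 (v : seq nat) n (F : nat -> R) : (n <= size v)%N ->
  \sum_(k < n) F (nth 0%N v k) = \sum_(y <- take n v) F y.
Proof.
move=> hn; rewrite (big_nth 0%N) size_takel // big_mkord.
by apply: eq_bigr => k _; rewrite nth_take.
Qed.

Lemma conv2 P p : (p < N)%N ->
  load P p = \sum_(y <- [seq y <- take p.+1 b | P y]) alpha y.
Proof.
move=> hp; rewrite big_filter (big_nth 0%N) size_takel ?sizeb // big_mkord big_mkcond /=.
by apply: eq_bigr => k _; rewrite /w nth_take.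
Qed.

Lemma s_feas s : is_ordered_set N s -> no_outage f alpha beta s ->
  feasb (fun z => z \in s).
Proof.
move=> /andP[us als] nos; apply/feasP => p hp sp.
set K := [seq y <- take p.+1 b | y \in s].
pose Q n := (n < size s)%N && (nth 0%N s n \in K).
have exQ : exists n, Q n.
  exists (index (nth 0%N b p) s); rewrite /Q index_mem sp nth_index //.
  by rewrite mem_filter sp (take_nth 0%N) ?sizeb // mem_rcons in_cons eqxx.
have ubQ : forall n, Q n -> (n <= size s)%N by move=> n /andP[h _]; exact: ltnW.
case: (ex_maxnP exQ ubQ) => l /andP[hl mK] lmax.
set m := nth 0%N s l in mK.
have hmb : (index m b <= p)%N.
  move: mK; rewrite mem_filter => /andP[_ hm].
  by have := index_ltn hm.
have mb : m \in b by move: mK; rewrite mem_filter => /andP[_ /mem_take].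
have hmN : (index m b < N)%N by rewrite -sizeb index_mem.
have bm : beta m <= beta (nth 0%N b p).
  by have := beta_mono hmb hp; rewrite nth_index.
apply: le_trans bm; apply: le_trans (nos l hl); rewrite /completion.
apply: load_div_le; rewrite conv2 // conv1 //.
apply: sum_sub.
- by rewrite filter_uniq // take_uniq // uniqb.
- by rewrite take_uniq.
- move=> y yK; have ys : y \in s by move: yK; rewrite mem_filter => /andP[].
  rewrite in_take // ltnS; apply: lmax; rewrite /Q index_mem ys nth_index //.
- move=> y /mem_take ys; apply: ltW; apply: apos.
  by move/allP: als; apply.
Qed.

Lemma count_s s : is_ordered_set N s -> count (fun z => z \in s) b = size s.
Proof.
move=> /andP[us als]; rewrite -size_filter; apply: perm_size.
apply: uniq_perm => //; first by rewrite filter_uniq // uniqb.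
move=> y; rewrite mem_filter; case ys: (y \in s) => //=.
by rewrite memb; move/allP: als; apply.
Qed.

Lemma final s : optimal_ordered_set N f alpha beta s ->
  optimal_ordered_set N f alpha beta (ojs N f alpha beta c b) /\
  size (ojs N f alpha beta c b) = size s.
Proof.
case=> os nos smax.
rewrite ojs_eq.
have h1 : (size [seq y <- b | G y] <= size s)%N.
  by apply: smax; [exact: G_ordered | exact: G_noout].
have h2 : (size s <= size [seq y <- b | G y])%N.
  by rewrite -count_s // size_filter; apply: opt_G; apply: s_feas.
have e : size [seq y <- b | G y] = size s by apply/eqP; rewrite eqn_leq h1 h2.
split => //; split; [exact: G_ordered | exact: G_noout |].
by move=> t ot nt; rewrite e; apply: smax.
Qed.

End Pf.

Theorem lemma4 (R : realFieldType) (N : nat) (f : R) (alpha beta : nat -> R)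
    (c b s : seq nat) :
  0 < f ->
  (forall a, (0 < a <= N)%N -> 0 < alpha a) ->
  perm_eq c (iota 1 N) -> sorted (c_order alpha beta) c ->
  perm_eq b (iota 1 N) -> sorted (b_order alpha beta) b ->
  optimal_ordered_set N f alpha beta s ->
  optimal_ordered_set N f alpha beta (ojs N f alpha beta c b) /\
  size (ojs N f alpha beta c b) = size s.
Proof.
move=> fpos apos Hc Hcs Hb Hbs; exact: final.
Qed.
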